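(* Let $G$ be a connected graph and let $(T,\mathcal X)$, $\mathcal X=\{X_t:t\in V(T)\}$, be a tree-cut decomposition of $G$ of finite adhesion whose parts are exactly the $\omega$-edge blocks of $G$ and such that for every edge $t_1t_2\in E(T)$ there is an edge of $G$ between $X_{t_1}$ and $X_{t_2}$. For a subgraph $C'$ of $T$ write $\bigcup C'=\bigcup_{t\in V(C')}X_t$. Then: (1) for every region $C'$ of $T$, the induced subgraph $G[\bigcup C']$ is a region of $G$; (2) for every region $C$ of $G$ there exist finitely many pairwise disjoint regions $C'_1,\dots,C'_n$ of $T$ such that $C=G[\bigcup C'_1\cup\dots\cup\bigcup C'_n]$.
   Context: Two vertices $x,y$ of $G$ are finitely separable if some finite set of edges separates them in $G$; the equivalence classes of the relation ''not finitely separable'' are the $\omega$-edge blocks of $G$. A tree-cut decomposition of $G$ is a pair $(T,\mathcal X)$ with $T$ a tree and $\mathcal X=\{X_t:t\in V(T)\}$ a partition of $V(G)$ into nonempty parts indexed by $V(T)$. For an edge $e=t_1t_2$ of $T$ with $T_1\ni t_1$, $T_2\ni t_2$ the components of $T-e$, its adhesion set is $X_e=E_G(\bigcup_{t\in T_1}X_t,\bigcup_{t\in T_2}X_t)$; finite adhesion means all $X_e$ are finite. A region of a graph $H$ is a connected induced subgraph $C$ with finite boundary $\partial C=\{xy\in E(H):x\in C,y\notin C\}$. *)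

(* Defs.v *)
From Stdlib Require Import List Relations.
Import ListNotations.

Record graph := Graph {
  vert :> Type;
  adj : vert -> vert -> Prop;
  adj_sym : forall x y, adj x y -> adj y x;
  adj_irrefl : forall x, ~ adj x x
}.
Arguments adj {g} _ _.

(* A finite set of edges, given as a finite list of (ordered) pairs;
   the unordered edge {u,v} belongs to F iff (u,v) or (v,u) occurs in F. *)
Definition edge_in {G : graph} (F : list (G * G)) (u v : G) : Prop :=
  In (u, v) F \/ In (v, u) F.

Definition adj_minus {G : graph} (F : list (G * G)) (u v : G) : Prop :=
  adj u v /\ ~ edge_in F u v.

Definition fin_separable (G : graph) (x y : G) : Prop :=
  exists F : list (G * G), ~ clos_refl_trans G (adj_minus F) x y.

Definition adj_in {G : graph} (S : G -> Prop) (u v : G) : Prop :=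
  S u /\ S v /\ adj u v.

Definition connected_set (G : graph) (S : G -> Prop) : Prop :=
  (exists x, S x) /\
  forall x y, S x -> S y -> clos_refl_trans G (adj_in S) x y.

Definition connected_graph (G : graph) : Prop :=
  connected_set G (fun _ => True).

(* An edge set (given as a predicate on ordered pairs, symmetric in use)
   is finite if all its edges are listed in some finite list. *)
Definition finite_edges {G : graph} (E : G -> G -> Prop) : Prop :=
  exists l : list (G * G), forall x y, E x y -> In (x, y) l.

Definition boundary {G : graph} (C : G -> Prop) (x y : G) : Prop :=
  adj x y /\ C x /\ ~ C y.

(* A region: a connected induced subgraph with finite boundary
   (represented by its vertex set). *)
Definition region (G : graph) (C : G -> Prop) : Prop :=
  connected_set G C /\ finite_edges (boundary C).

Fixpoint is_walk {G : graph} (x : G) (l : list G) : Prop :=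
  match l with
  | [] => True
  | y :: l' => adj x y /\ is_walk y l'
  end.

Definition is_cycle {G : graph} (v0 : G) (l : list G) : Prop :=
  2 <= length l /\ NoDup (v0 :: l) /\ is_walk v0 l /\ adj (last l v0) v0.

Definition is_tree (T : graph) : Prop :=
  connected_graph T /\ forall v0 l, ~ @is_cycle T v0 l.

(* Tree-cut decomposition of G over tree T: the partition {X_t} of V(G)
   into nonempty parts indexed by V(T) is encoded by the map f : V(G) -> V(T)
   with X_t = f^{-1}(t); nonemptiness of parts = surjectivity of f. *)
Definition tree_cut_decomposition (G T : graph) (f : G -> T) : Prop :=
  is_tree T /\ forall t : T, exists x : G, f x = t.

(* For an edge t1t2 of T: the component of T - t1t2 containing t1. *)
Definition side {T : graph} (t1 t2 : T) : T -> Prop :=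
  clos_refl_trans T
    (fun u v => adj u v /\ ~ ((u = t1 /\ v = t2) \/ (u = t2 /\ v = t1))) t1.

Definition adhesion {G T : graph} (f : G -> T) (t1 t2 : T) (x y : G) : Prop :=
  adj x y /\ side t1 t2 (f x) /\ side t2 t1 (f y).

Definition finite_adhesion {G T : graph} (f : G -> T) : Prop :=
  forall t1 t2 : T, adj t1 t2 -> finite_edges (adhesion f t1 t2).

Definition parts_are_omega_blocks {G T : graph} (f : G -> T) : Prop :=
  forall x y : G, f x = f y <-> ~ fin_separable G x y.

Definition bigU {G T : graph} (f : G -> T) (C' : T -> Prop) : G -> Prop :=
  fun x => C' (f x).

(* Main.v *)
Require Import Defs.
From Stdlib Require Import List Relations Classical Arith Lia.
Import ListNotations.

Lemma crt_mono {A} (R1 R2 : relation A) :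
  (forall x y, R1 x y -> R2 x y) ->
  forall x y, clos_refl_trans A R1 x y -> clos_refl_trans A R2 x y.
Proof.
  intros H x y Hc. induction Hc.
  - apply rt_step; auto.
  - apply rt_refl.
  - eapply rt_trans; eauto.
Qed.

Lemma crt_sym {A} (R : relation A) :
  (forall x y, R x y -> R y x) ->
  forall x y, clos_refl_trans A R x y -> clos_refl_trans A R y x.
Proof.
  intros H x y Hc. induction Hc.
  - apply rt_step; auto.
  - apply rt_refl.
  - eapply rt_trans; eauto.
Qed.

Lemma adj_in_sym {G : graph} (S : G -> Prop) x y : adj_in S x y -> adj_in S y x.
Proof. intros [a [b c]]. repeat split; auto. apply adj_sym; auto. Qed.

Lemma crt_adj_in_mem {G : graph} (S : G -> Prop) a b :
  clos_refl_trans G (adj_in S) a b -> S a -> S b.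
Proof.
  intros H. induction H; auto. intros _. destruct H as [_ [h _]]; auto.
Qed.

Lemma stay {G : graph} (S : G -> Prop) (l : list (G * G)) :
  (forall a b, boundary S a b -> In (a, b) l) ->
  forall u v, clos_refl_trans G (adj_minus l) u v -> S u ->
    S v /\ clos_refl_trans G (adj_in S) u v.
Proof.
  intros Hl u v H. induction H; intros Hs.
  - destruct H as [Ha He].
    destruct (classic (S y)) as [Hy | Hy].
    + split; auto. apply rt_step. repeat split; auto.
    + exfalso. apply He. left. apply Hl. repeat split; auto.
  - split; auto. apply rt_refl.
  - destruct (IHclos_refl_trans1 Hs) as [Hy P1].
    destruct (IHclos_refl_trans2 Hy) as [Hz P2].
    split; auto. eapply rt_trans; eauto.
Qed.

Lemma same_part {G T : graph} (f : G -> T) (S : G -> Prop) (l : list (G * G)) :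
  parts_are_omega_blocks f ->
  (forall a b, boundary S a b -> In (a, b) l) ->
  forall x y, S x -> f x = f y -> S y /\ clos_refl_trans G (adj_in S) x y.
Proof.
  intros Hp Hl x y Hx Hf.
  apply Hp in Hf.
  assert (clos_refl_trans G (adj_minus l) x y).
  { apply NNPP. intro Hn. apply Hf. exists l. auto. }
  apply (stay S l Hl); auto.
Qed.

Lemma exit_lem {A} (R : relation A) (P : A -> Prop) a b :
  clos_refl_trans_1n A R a b -> ~ P b ->
  (~ P a /\ clos_refl_trans A (fun s t => R s t /\ ~ P s /\ ~ P t) a b) \/
  exists u v, R u v /\ P u /\ ~ P v /\
    clos_refl_trans A (fun s t => R s t /\ ~ P s /\ ~ P t) v b.
Proof.
  intros H Hb. induction H.
  - left. split; auto. apply rt_refl.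
  - destruct (IHclos_refl_trans_1n Hb) as [[Hy Py] | Hex].
    + destruct (classic (P x)) as [Hx | Hx].
      * right. exists x, y. auto.
      * left. split; auto. eapply rt_trans; [apply rt_step|]; eauto.
    + right; auto.
Qed.
Lemma big_list {G T : graph} (f : G -> T) (lT : list (T * T)) :
  finite_adhesion f ->
  exists lG : list (G * G), forall u v, In (u, v) lT -> adj u v ->
    forall x y, adhesion f u v x y -> In (x, y) lG.
Proof.
  intros Hfa. induction lT as [|[u v] lT IH].
  - exists []. intros u v [].
  - destruct IH as [lG HlG].
    destruct (classic (adj u v)) as [Huv | Huv].
    + destruct (Hfa u v Huv) as [l1 Hl1].
      exists (l1 ++ lG). intros u' v' Hin Ha x y Had. apply in_or_app.
      destruct Hin as [Heq | Hin].
      * inversion Heq; subst. left. auto.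
      * right. eauto.
    + exists lG. intros u' v' Hin Ha x y Had.
      destruct Hin as [Heq | Hin].
      * inversion Heq; subst. contradiction.
      * eauto.
Qed.

Lemma part1 (G T : graph) (f : G -> T) :
  tree_cut_decomposition G T f ->
  finite_adhesion f ->
  parts_are_omega_blocks f ->
  (forall t1 t2 : T, adj t1 t2 ->
     exists x y : G, adj x y /\ f x = t1 /\ f y = t2) ->
  forall C' : T -> Prop, region T C' -> region G (bigU f C').
Proof.
  intros [[[_ HTc] _] Hsurj] Hfa Hp Hedge C' [[[t0 Ht0] Hconn] [lT HlT]].
  assert (Hfin : finite_edges (boundary (bigU f C'))).
  { destruct (big_list f lT Hfa) as [lG HlG].
    exists lG. intros x y [Hxy [Hx Hy]]. unfold bigU in *.
    pose proof (clos_rt_rt1n _ _ _ _ (HTc (f x) (f y) I I)) as Hpath.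
    destruct (exit_lem _ C' _ _ Hpath Hy) as [[Hn _] | [u [v [Ruv [Pu [Pv Pth]]]]]].
    - contradiction.
    - destruct Ruv as [_ [_ Huv]].
      apply (HlG u v); auto.
      + apply HlT. repeat split; auto.
      + split; [auto|split].
        * unfold side. apply (crt_mono (adj_in C')).
          -- intros a b [Ha [Hb Hab]]. split; auto.
             intros [[_ Hq] | [Hq _]]; subst; contradiction.
          -- apply Hconn; auto.
        * unfold side. apply (crt_mono (fun s t => adj_in (fun _ : T => True) s t /\ ~ C' s /\ ~ C' t)).
          -- intros a b [[_ [_ Hab]] [Ha Hb]]. split; auto.
             intros [[_ Hq] | [Hq _]]; subst; contradiction.
          -- auto. }
  split; [split|exact Hfin].
  - destruct (Hsurj t0) as [x0 Hx0]. exists x0. unfold bigU. rewrite Hx0. auto.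
  - destruct Hfin as [lG HlG].
    assert (Hsp := fun x y => same_part f (bigU f C') lG Hp HlG x y).
    assert (Hlift : forall s t, clos_refl_trans T (adj_in C') s t -> C' s ->
      forall x y, f x = s -> f y = t -> clos_refl_trans G (adj_in (bigU f C')) x y).
    { intros s t H. induction H; intros Hs a b Ha Hb.
      - destruct H as [Hx [Hy Hxy]].
        destruct (Hedge _ _ Hxy) as [x' [y' [Hxy' [Hfx Hfy]]]].
        apply rt_trans with x'.
        + apply Hsp; [unfold bigU; congruence | congruence].
        + apply rt_trans with y'.
          * apply rt_step. unfold adj_in, bigU. rewrite Hfx, Hfy. auto.
          * apply Hsp; [unfold bigU; congruence | congruence].
      - apply Hsp; [unfold bigU; congruence | congruence].
      - assert (C' y) by (eapply crt_adj_in_mem; eauto).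
        destruct (Hsurj y) as [w Hw].
        apply rt_trans with w; eauto. }
    intros x y Hx Hy. unfold bigU in Hx, Hy.
    eapply (Hlift (f x) (f y)); eauto.
Qed.
Lemma reps {T : graph} (D : T -> Prop) (d : T) {G : graph} (f : G -> T) (L0 : list (G * G)) :
  exists R : list T,
    (forall r, In r R -> D r) /\
    (forall i j, i < length R -> j < length R -> i <> j ->
       ~ clos_refl_trans T (adj_in D) (nth i R d) (nth j R d)) /\
    (forall x y, In (x, y) L0 -> D (f x) ->
       exists r, In r R /\ clos_refl_trans T (adj_in D) r (f x)).
Proof.
  assert (Hs : forall a b, clos_refl_trans T (adj_in D) a b -> clos_refl_trans T (adj_in D) b a)
    by (apply crt_sym; apply adj_in_sym).
  induction L0 as [|[x y] L0 IH].
  - exists []. repeat split.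
    + intros r [].
    + intros i j Hi. simpl in Hi. lia.
    + intros x y [].
  - destruct IH as [R [H1 [H2 H3]]].
    destruct (classic (D (f x) /\ forall r, In r R -> ~ clos_refl_trans T (adj_in D) r (f x)))
      as [[Hd Hn] | Hn].
    + exists (f x :: R). repeat split.
      * intros r [<- | Hr]; auto.
      * intros [|i] [|j] Hi Hj Hij; simpl in *.
        -- lia.
        -- intro Hc. apply (Hn (nth j R d)). apply nth_In; lia. auto.
        -- intro Hc. apply (Hn (nth i R d)). apply nth_In; lia. auto.
        -- apply H2; lia.
      * intros x' y' [Heq | Hin] Hd'.
        -- inversion Heq; subst. exists (f x'). split; [left; auto | apply rt_refl].
        -- destruct (H3 x' y' Hin Hd') as [r [Hr Hc]]. exists r. split; [right|]; auto.
    + exists R. repeat split; auto.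
      intros x' y' [Heq | Hin] Hd'.
      * inversion Heq; subst.
        apply NNPP. intro Hne. apply Hn. split; auto.
        intros r Hr Hc. apply Hne. exists r. auto.
      * eauto.
Qed.

Lemma part2 (G T : graph) (f : G -> T) :
  tree_cut_decomposition G T f ->
  parts_are_omega_blocks f ->
  (forall t1 t2 : T, adj t1 t2 ->
     exists x y : G, adj x y /\ f x = t1 /\ f y = t2) ->
  forall C : G -> Prop, region G C ->
     exists (n : nat) (Cs : nat -> T -> Prop),
       (forall i, i < n -> region T (Cs i)) /\
       (forall i j, i < n -> j < n -> i <> j ->
          forall t, ~ (Cs i t /\ Cs j t)) /\
       (forall x : G, C x <-> exists i, i < n /\ bigU f (Cs i) x).
Proof.
  intros [[[_ HTc] _] Hsurj] Hp Hedge C [[[x0 Hx0] HCconn] [L HL]].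
  assert (Hun : forall x y, C x -> f x = f y -> C y)
    by (intros x y Hx Hf; exact (proj1 (same_part f C L Hp HL x y Hx Hf))).
  set (D := fun t => exists x, C x /\ f x = t).
  set (conn := clos_refl_trans T (adj_in D)).
  assert (Hs : forall a b, conn a b -> conn b a)
    by (apply crt_sym; apply adj_in_sym).
  assert (Htr : forall a b c, conn a b -> conn b c -> conn a c)
    by (intros; eapply rt_trans; eauto).
  assert (HDmem : forall a b, conn a b -> D a -> D b)
    by (intros a b; apply crt_adj_in_mem).
  destruct (reps D (f x0) f ((x0, x0) :: L)) as [R [H1 [H2 H3]]].
  exists (length R), (fun i t => D t /\ conn (nth i R (f x0)) t).
  split; [|split; [|intro x; split]].
  -
    intros i Hi. set (r := nth i R (f x0)).
    assert (Hr : D r) by (apply H1; apply nth_In; auto).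
    set (K := fun t => D t /\ conn r t).
    assert (Hk : forall s t, clos_refl_trans T (adj_in D) s t -> conn r s ->
                 clos_refl_trans T (adj_in K) s t).
    { intros s t H. induction H; intros Hrs.
      - apply rt_step. destruct H as [Ha [Hb Hab]].
        repeat split; auto. apply Htr with x; auto. apply rt_step. repeat split; auto.
      - apply rt_refl.
      - apply rt_trans with y; auto. apply IHclos_refl_trans2. apply Htr with x; auto. }
    split.
    + split.
      * exists r. split; auto. apply rt_refl.
      * intros a b [Ha Hra] [Hb Hrb].
        apply rt_trans with r.
        -- apply (crt_sym _ (adj_in_sym K)). apply Hk; auto. apply rt_refl.
        -- apply Hk; auto. apply rt_refl.
    + exists (map (fun p => (f (fst p), f (snd p))) L).
      intros a b [Hab [[Ha Hra] Hb]].
      assert (HnDb : ~ D b).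
      { intro HDb. apply Hb. split; auto. apply Htr with a; auto. apply rt_step. repeat split; auto. }
      destruct (Hedge a b Hab) as [x [y [Hxy [Hfx Hfy]]]].
      destruct Ha as [x' [Hx' Hfx']].
      assert (Hx : C x) by (apply Hun with x'; congruence).
      assert (Hy : ~ C y) by (intro Hy; apply HnDb; exists y; auto).
      assert (Hin : In (x, y) L) by (apply HL; repeat split; auto).
      rewrite <- Hfx, <- Hfy.
      apply (in_map (fun p => (f (fst p), f (snd p))) L (x, y) Hin).
  -
    intros i j Hi Hj Hij t [[_ Hi'] [_ Hj']].
    apply (H2 i j Hi Hj Hij). apply Htr with t; auto.
  - intros Hx.
    assert (HDx : D (f x)) by (exists x; auto).
    assert (Hex : exists u w, In (u, w) ((x0, x0) :: L) /\ D (f u) /\ conn (f u) (f x)).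
    { destruct (classic (conn (f x0) (f x))) as [Hc | Hc].
      - exists x0, x0. split; [left; auto|]. split; auto. exists x0; auto.
      - pose proof (clos_rt_rt1n _ _ _ _ (HTc (f x) (f x0) I I)) as Hpath.
        assert (Hn0 : ~ conn (f x) (f x0)) by (intro; apply Hc; auto).
        destruct (exit_lem _ (conn (f x)) _ _ Hpath Hn0)
          as [[Hn _] | [u [v [Ruv [Pu [Pv _]]]]]].
        + exfalso. apply Hn. apply rt_refl.
        + destruct Ruv as [_ [_ Huv]].
          assert (HDu : D u) by (eapply HDmem; eauto).
          assert (HnDv : ~ D v).
          { intro HDv. apply Pv. apply Htr with u; auto. apply rt_step. repeat split; auto. }
          destruct (Hedge u v Huv) as [x' [y' [Hxy [Hfx Hfy]]]].
          destruct HDu as [x'' [Hx'' Hfx'']].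
          assert (Hx' : C x') by (apply Hun with x''; congruence).
          assert (Hy' : ~ C y') by (intro Hy; apply HnDv; exists y'; auto).
          exists x', y'. split.
          * right. apply HL. repeat split; auto.
          * split; [exists x'; auto|]. rewrite Hfx. auto. }
    destruct Hex as [u [w [Hin [HDu Hc]]]].
    destruct (H3 u w Hin HDu) as [r [Hr Hrc]].
    destruct (In_nth R r (f x0) Hr) as [i [Hi Hnth]].
    exists i. split; auto. unfold bigU. split; auto. rewrite Hnth. apply Htr with (f u); auto.
  - intros [i [Hi [[x' [Hx' Hf']] _]]]. apply Hun with x'; auto.
Qed.

Theorem lemma2p5 (G T : graph) (f : G -> T) :
  connected_graph G ->
  tree_cut_decomposition G T f ->
  finite_adhesion f ->
  parts_are_omega_blocks f ->
  (forall t1 t2 : T, adj t1 t2 ->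
     exists x y : G, adj x y /\ f x = t1 /\ f y = t2) ->
  (forall C' : T -> Prop, region T C' -> region G (bigU f C')) /\
  (forall C : G -> Prop, region G C ->
     exists (n : nat) (Cs : nat -> T -> Prop),
       (forall i, i < n -> region T (Cs i)) /\
       (forall i j, i < n -> j < n -> i <> j ->
          forall t, ~ (Cs i t /\ Cs j t)) /\
       (forall x : G, C x <-> exists i, i < n /\ bigU f (Cs i) x)).
Proof.
  intros _ Htc Hfa Hp Hedge. split.
  - apply part1; auto.
  - apply part2; auto.
Qed.
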